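(* Let $\mathcal{A}$ be a GFG-NRW whose language is recognized by some GFG-NBW, and let $g$ be a finite-state strategy witnessing its GFGness. Then: (1) a $g$-memory $m$ of a state $q$ of $\mathcal{A}$ cannot belong both to a $q$-exclusive accepting cycle of $\mathcal{A}_g$ and to a rejecting cycle of $\mathcal{A}_g$; (2) if $m$ and $m'$ are $g$-memories of a state $q$ such that $m$ belongs to a $q$-exclusive accepting cycle and $m'$ belongs to a rejecting cycle, and $P_{m\to m'}$, $P_{m'\to m}$ denote the sets of paths of $\mathcal{A}_g$ from $m$ to $m'$ and from $m'$ to $m$ respectively, then for $P=P_{m\to m'}$ or for $P=P_{m'\to m}$ we have that $P$ is empty or every combination of paths from $P$ is accepting.
   Context: An automaton $\langle\Sigma,Q,Q_0,\delta,\alpha\rangle$ has $\delta:Q\times\Sigma\to2^Q$; runs are accepting if the set of infinitely visited states satisfies $\alpha$. Rabin ($\alpha$ a set of pairs $\langle E,F\rangle$, $E$ bad, $F$ good): a set $S$ is accepting iff some pair has $S\cap E=\emptyset$ and $S\cap F\neq\emptyset$; Büchi ($\alpha\subseteq Q$): accepting iff $S\cap\alpha\ne\emptyset$. NRW/NBW: nondeterministic Rabin/Büchi word automaton. $\mathcal{A}$ is GFG if there is a strategy $g:\Sigma^*\to Q$ such that for every $w=a_1a_2\cdots$, $g(\epsilon),g(a_1),g(a_1a_2),\ldots$ is a run on $w$, accepting whenever $w\in L(\mathcal{A})$. Finite-state strategies are transducers $g=\langle\Sigma,Q,M,m_0,\rho,\tau\rangle$ (finite memories $M$, $\rho:M\times\Sigma\to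 M$ extended to words from $m_0$, $\tau:M\to Q$, $g(u)=\tau(\rho(u))$); $m$ is a ($g$-)memory of $q$ if $\tau(m)=q$. $\mathcal{A}_g=\langle\Sigma,M,m_0,\rho,\alpha_g\rangle$ where $\alpha_g$ replaces each set $F$ in $\alpha$ by $\{m\mid\tau(m)\in F\}$. Paths are finite sequences of states (memories) joined by transitions; cycles start and end at the same element; a path or cycle is accepting/rejecting according to whether its set of elements is accepting. For a set $P$ of paths, a combination of paths from $P$ is the union of the element sets of a nonempty subset of $P$. A path of $\mathcal{A}_g$ is $q$-exclusive accepting if its set of memories is accepting but that set minus the memories of $q$ is not accepting. *)

(* Defs.v *)
From mathcomp Require Import all_boot.
Set Implicit Arguments. Unset Strict Implicit. Unset Printing Implicit Defensive.

Section Automata.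
Variables (Sigma Q : finType).

(* A nondeterministic word automaton <Sigma, Q, Q0, delta, alpha>;
   the acceptance condition is given as a predicate on the set of
   infinitely visited states (represented as a Prop-valued predicate). *)

Definition is_run (Q0 : {set Q}) (delta : Q -> Sigma -> {set Q})
  (w : nat -> Sigma) (r : nat -> Q) : Prop :=
  r 0 \in Q0 /\ forall i, r i.+1 \in delta (r i) (w i).

Definition inf_often (r : nat -> Q) (q : Q) : Prop :=
  forall n, exists k, n <= k /\ r k = q.

Definition rabin_acc (alpha : seq ({set Q} * {set Q})) (S : Q -> Prop) : Prop :=
  exists2 EF, EF \in alpha &
    (forall q, q \in EF.1 -> ~ S q) /\ (exists q, q \in EF.2 /\ S q).

Definition buchi_acc (alpha : {set Q}) (S : Q -> Prop) : Prop :=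
  exists q, q \in alpha /\ S q.

Definition lang (Q0 : {set Q}) (delta : Q -> Sigma -> {set Q})
  (acc : (Q -> Prop) -> Prop) (w : nat -> Sigma) : Prop :=
  exists r, is_run Q0 delta w r /\ acc (inf_often r).

(* the prefix a_1 ... a_n of w = a_1 a_2 ... (with a_(i+1) = w i) *)
Definition prefix (w : nat -> Sigma) (n : nat) : seq Sigma := mkseq w n.

Definition GFG_strategy (Q0 : {set Q}) (delta : Q -> Sigma -> {set Q})
  (acc : (Q -> Prop) -> Prop) (g : seq Sigma -> Q) : Prop :=
  forall w, is_run Q0 delta w (fun n => g (prefix w n)) /\
    (lang Q0 delta acc w -> acc (inf_often (fun n => g (prefix w n)))).

Definition GFG (Q0 : {set Q}) (delta : Q -> Sigma -> {set Q})
  (acc : (Q -> Prop) -> Prop) : Prop :=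
  exists g, GFG_strategy Q0 delta acc g.

End Automata.

Section Transducer.
Variables (Sigma Q M : finType).
Variables (m0 : M) (rho : M -> Sigma -> M) (tau : M -> Q).

Definition strat_of (u : seq Sigma) : Q := tau (foldl rho m0 u).

Definition reachable (m : M) : Prop := exists u : seq Sigma, foldl rho m0 u = m.

(* A_g = <Sigma, M, m0, rho, alpha_g> *)
Definition alpha_g (alpha : seq ({set Q} * {set Q})) : seq ({set M} * {set M}) :=
  map (fun EF : {set Q} * {set Q} =>
         ([set m | tau m \in EF.1] : {set M}, [set m | tau m \in EF.2] : {set M})) alpha.

Definition edge_g : rel M := fun m m' => [exists a, rho m a == m'].

Definition acc_g (alpha : seq ({set Q} * {set Q})) (X : {set M}) : Prop :=
  rabin_acc (alpha_g alpha) (fun m => m \in X).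

(* A path of A_g from m to m' is  m :: s  with  path edge_g m s  and
   last m s = m'; its set of elements is [set x in m :: s].
   A cycle through m is such a path from x to x with at least one
   transition (s != [::]) containing m. *)
Definition path_from_to (m m' : M) (s : seq M) : bool :=
  path edge_g m s && (last m s == m').

Definition cycle_through (m : M) (x : M) (s : seq M) : bool :=
  (s != [::]) && path_from_to x x s && (m \in x :: s).

Definition excl_acc (alpha : seq ({set Q} * {set Q})) (q : Q) (X : {set M}) : Prop :=
  acc_g alpha X /\ ~ acc_g alpha (X :\: [set m | tau m == q]).

Definition on_excl_acc_cycle (alpha : seq ({set Q} * {set Q})) (q : Q) (m : M) : Prop :=
  exists x s, cycle_through m x s /\ excl_acc alpha q [set y in x :: s].

Definition on_rej_cycle (alpha : seq ({set Q} * {set Q})) (m : M) : Prop :=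
  exists x s, cycle_through m x s /\ ~ acc_g alpha [set y in x :: s].

(* P_{m -> m'} is empty, or every combination of paths from it (the union
   of the element sets of a nonempty collection of such paths) is accepting.
   Since M is finite, unions over arbitrary nonempty subsets coincide with
   unions over nonempty finite lists. *)
Definition empty_or_all_comb_acc (alpha : seq ({set Q} * {set Q})) (m m' : M) : Prop :=
  (~ exists s, path_from_to m m' s) \/
  (forall ps : seq (seq M), ps != [::] ->
     (forall s, s \in ps -> path_from_to m m' s) ->
     acc_g alpha [set y | has (fun s => y \in m :: s) ps]).
End Transducer.

(* Main.v *)
Require Import Defs.
From mathcomp Require Import all_boot zify.
From Stdlib Require Import Classical.
Set Implicit Arguments. Unset Strict Implicit. Unset Printing Implicit Defensive.

Section Basic.
Variables (Sigma Q M : finType) (rho : M -> Sigma -> M) (tau : M -> Q).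
Variable alpha : seq ({set Q} * {set Q}).

Definition W (x : M) (v : seq Sigma) : {set M} :=
  [set y | [exists j : 'I_(size v).+1, y == foldl rho x (take j v)]].

Lemma WP x v y : reflect (exists2 j, j <= size v & y = foldl rho x (take j v)) (y \in W x v).
Proof.
rewrite inE; apply: (iffP existsP) => [[j /eqP ->]|[j hj ->]].
  by exists j => //; rewrite -ltnS ltn_ord.
have hj' : j < (size v).+1 by rewrite ltnS.
by exists (Ordinal hj').
Qed.

Lemma W0 x v : x \in W x v.
Proof. by apply/WP; exists 0 => //; rewrite take0. Qed.

Lemma W_cat x v1 v2 : W x (v1 ++ v2) = W x v1 :|: W (foldl rho x v1) v2.
Proof.
apply/setP => y; rewrite in_setU; apply/WP/orP.
  move=> [j hj ->]; rewrite size_cat in hj; case: (ltnP j (size v1)) => h.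
    by left; apply/WP; exists j; [exact: ltnW | rewrite take_cat h].
  right; apply/WP; exists (j - size v1); first by lia.
  by rewrite take_cat ltnNge h /= foldl_cat.
move=> [/WP [j hj ->]|/WP [j hj ->]].
  exists j; first by rewrite size_cat; lia.
  rewrite take_cat; case: (ltnP j (size v1)) => h //.
  have -> : j = size v1 by lia.
  by rewrite subnn take0 cats0 take_size.
exists (size v1 + j); first by rewrite size_cat; lia.
by rewrite take_cat ltnNge leq_addr /= addKn foldl_cat.
Qed.

Lemma W_nil x : W x [::] = [set x].
Proof.
apply/setP => y; rewrite in_set1; apply/WP/eqP => [[j _ ->]|->] //.
by exists 0.
Qed.

Lemma path_word x s : path (edge_g rho) x s -> exists v : seq Sigma,
  size v = size s /\ forall j, j <= size s -> foldl rho x (take j v) = nth x (x :: s) j.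
Proof.
elim: s x => [|y s IH] x /=.
  by move=> _; exists [::]; split => // j; rewrite leqn0 => /eqP ->.
move=> /andP [/existsP [a /eqP ha] /IH [v [hs hv]]].
exists (a :: v); split; first by rewrite /= hs.
case=> [|j] hj //=.
by rewrite ha hv // (set_nth_default y).
Qed.

Lemma cyc_W x s : path (edge_g rho) x s -> exists v : seq Sigma,
  size v = size s /\ foldl rho x v = last x s /\ [set y in x :: s] = W x v.
Proof.
move=> /path_word [v [hs hv]]; exists v; split => //; split.
  by rewrite -(take_size v) hs hv // (nth_last x (x :: s)).
apply/setP => y; rewrite inE; apply/idP/WP.
  move=> /(nthP x) [j hj <-]; exists j; first by rewrite hs -ltnS; exact: hj.
  by rewrite hv // -ltnS; exact: hj.
move=> [j hj ->]; rewrite hv; last by rewrite -hs.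
by apply: mem_nth; rewrite /= ltnS -hs.
Qed.

Lemma rot_W x v m : foldl rho x v = x -> m \in W x v -> exists v',
  size v' = size v /\ foldl rho m v' = m /\ W m v' = W x v.
Proof.
move=> hl /WP [j hj ->].
exists (drop j v ++ take j v); split; first by rewrite size_cat size_drop (size_takel hj); lia.
have hd : foldl rho (foldl rho x (take j v)) (drop j v) = x by rewrite -foldl_cat cat_take_drop.
split; first by rewrite foldl_cat hd.
by rewrite W_cat hd -[in RHS](cat_take_drop j v) W_cat setUC.
Qed.

Definition vn (v : seq Sigma) n := flatten (nseq n v).

Lemma vnS v n : vn v n.+1 = vn v n ++ v.
Proof.
rewrite /vn -flatten_rcons; congr flatten.
by elim: n => //= n ->.
Qed.


Lemma foldl_vn x v n : foldl rho x v = x -> foldl rho x (vn v n) = x.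
Proof. by move=> h; elim: n => // n IH; rewrite vnS foldl_cat IH h. Qed.

Lemma W_vn x v n : foldl rho x v = x -> 0 < n -> W x (vn v n) = W x v.
Proof.
move=> h; elim: n => // n IH _; rewrite vnS W_cat foldl_vn //.
case: n IH => [|n] IH; last by rewrite IH // setUid.
by rewrite /vn /= W_nil; apply/setUidPr; rewrite sub1set W0.
Qed.

Lemma acc_transfer (r : nat -> M) (S : {set M}) N :
  (forall n, N <= n -> r n \in S) ->
  (forall y, y \in S -> forall N', exists n, N' <= n /\ r n = y) ->
  (rabin_acc alpha (inf_often (fun n => tau (r n))) <-> acc_g tau alpha S).
Proof.
move=> hin hinf; split.
  move=> [EF0 hEF0 [hE [f [hf hfi]]]].
  exists ([set m | tau m \in EF0.1], [set m | tau m \in EF0.2]).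
    by apply: (map_f (fun EF : {set Q} * {set Q} => ([set m | tau m \in EF.1], [set m | tau m \in EF.2]))).
  split.
    move=> y /=; rewrite inE => hy yS; apply: (hE _ hy) => n.
    by have [k [hk <-]] := hinf y yS n; exists k.
  have [k [hk hkf]] := hfi N; exists (r k); split; last exact: hin.
  by rewrite /= inE hkf.
move=> [EF hEF [hE [y [hy yS]]]].
move: hEF => /mapP [EF0 hEF0 hEF]; subst EF.
exists EF0 => //; split.
  move=> q hq hqi; have [k [hk hkq]] := hqi N.
  by apply: (hE (r k)); [rewrite /= inE hkq | exact: hin].
exists (tau y); split; first by move: hy; rewrite /= inE.
by move=> n; have [k [hk <-]] := hinf y yS n; exists k.
Qed.

Lemma acc_sub (S T : {set M}) EF y :
  EF \in alpha_g tau alpha -> (forall z, z \in EF.1 -> z \notin S) ->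
  y \in EF.2 -> T \subset S -> y \in T -> acc_g tau alpha T.
Proof.
move=> hEF hE hy /subsetP hTS yT; exists EF => //; split.
  by move=> z /hE /negP h /hTS.
by exists y.
Qed.

Lemma alpha_g_tau EF y z : EF \in alpha_g tau alpha -> tau y = tau z ->
  (y \in EF.2) = (z \in EF.2).
Proof. by move=> /mapP [EF0 _ ->] h; rewrite /= !inE h. Qed.

End Basic.

Lemma pigeon (T : eqType) (r : nat -> T) (s : seq T) :
  (forall N, exists n, N <= n /\ r n \in s) ->
  exists q, q \in s /\ (forall n, exists k, n <= k /\ r k = q).
Proof.
elim: s => [|a s IH] h.
  by have [n [_]] := h 0.
case: (classic (forall n, exists k, n <= k /\ r k = a)) => ha.
  by exists a; rewrite mem_head.
have [N0 hN0] : exists N0, forall k, N0 <= k -> r k <> a.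
  apply: NNPP => hc; apply: ha => n; apply: NNPP => hc2; apply: hc; exists n => k hk hka.
  by apply: hc2; exists k.
have [q [hq hqi]] : exists q, q \in s /\ (forall n, exists k, n <= k /\ r k = q).
  apply: IH => N; have [n [hn hrn]] := h (maxn N N0); exists n; split.
    by move: hn; rewrite geq_max => /andP [].
  move: hrn; rewrite in_cons => /orP [/eqP hra|] //.
  by exfalso; apply: (hN0 n) => //; move: hn; rewrite geq_max => /andP [].
by exists q; rewrite in_cons hq orbT.
Qed.


Section Block.
Variables (Sigma M : finType) (rho : M -> Sigma -> M) (m0 m : M) (a0 : Sigma).
Variables (pre b : nat -> seq Sigma).
Hypothesis preS : forall k, pre k.+1 = pre k ++ b k.
Hypothesis b_ne : forall k, b k != [::].
Hypothesis pre0 : foldl rho m0 (pre 0) = m.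
Hypothesis bloop : forall k, foldl rho m (b k) = m.

Definition bw (i : nat) : Sigma := nth a0 (pre i.+1) i.

Lemma size_pre k : k + size (pre 0) <= size (pre k).
Proof.
elim: k => // k IH; rewrite preS size_cat.
have : 0 < size (b k) by rewrite lt0n size_eq0.
lia.
Qed.

Lemma pre_ext k l : k <= l -> exists t, pre l = pre k ++ t.
Proof.
elim: l => [|l IH]; first by rewrite leqn0 => /eqP ->; exists [::]; rewrite cats0.
rewrite leq_eqVlt => /orP [/eqP ->|]; first by exists [::]; rewrite cats0.
rewrite ltnS => /IH [t ht]; exists (t ++ b l); by rewrite preS ht catA.
Qed.

Lemma nth_pre i k : i < size (pre k) -> nth a0 (pre k) i = bw i.
Proof.
move=> hi; rewrite /bw.
have hs := size_pre i.+1.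
case: (leqP i.+1 k) => h.
  have [t ->] := pre_ext h; rewrite nth_cat.
  have -> : i < size (pre i.+1) by lia.
  done.
have [t ->] := pre_ext (ltnW h); by rewrite nth_cat hi.
Qed.

Lemma prefix_bw j k : j <= size (pre k) -> Defs.prefix bw j = take j (pre k).
Proof.
move=> hj; apply: (@eq_from_nth _ a0).
  by rewrite size_mkseq size_takel.
move=> i; rewrite size_mkseq => hi.
by rewrite nth_mkseq // nth_take // nth_pre //; lia.
Qed.

Lemma foldl_pre k : foldl rho m0 (pre k) = m.
Proof. by elim: k => // k IH; rewrite preS foldl_cat IH bloop. Qed.

Lemma mem_in (S : {set M}) : (forall k, W rho m (b k) \subset S) ->
  forall n, size (pre 0) <= n -> foldl rho m0 (Defs.prefix bw n) \in S.
Proof.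
move=> hS.
suff H : forall k n, size (pre 0) <= n <= size (pre k) -> foldl rho m0 (Defs.prefix bw n) \in S.
  move=> n hn; apply: (H n); rewrite hn /=; have := size_pre n; lia.
elim=> [|k IH] n /andP [h1 h2].
  have -> : n = size (pre 0) by lia.
  rewrite (prefix_bw (k := 0)) // take_size pre0.
  by apply: (subsetP (hS 0)); apply: W0.
case: (leqP n (size (pre k))) => h3; first by apply: IH; rewrite h1.
rewrite (prefix_bw h2) preS take_cat ltnNge (ltnW h3) /= foldl_cat foldl_pre.
apply: (subsetP (hS k)); apply/WP; exists (n - size (pre k)) => //.
move: h2; rewrite preS size_cat; lia.
Qed.

Lemma mem_inf (S : {set M}) : (forall k, S \subset W rho m (b k)) ->
  forall y, y \in S -> forall N, exists n, N <= n /\ foldl rho m0 (Defs.prefix bw n) = y.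
Proof.
move=> hS y yS N; have /WP [j hj ->] := subsetP (hS N) y yS.
exists (size (pre N) + j); split.
  have := size_pre N; lia.
rewrite (prefix_bw (k := N.+1)); last by rewrite preS size_cat; lia.
by rewrite preS take_cat ltnNge leq_addr /= addKn foldl_cat foldl_pre.
Qed.

End Block.

Section Land.
Variables (Sigma Q M : finType) (Q0 : {set Q}) (delta : Q -> Sigma -> {set Q}).
Variables (alpha : seq ({set Q} * {set Q})) (m0 : M) (rho : M -> Sigma -> M) (tau : M -> Q).
Variables (Q' : finType) (Q0' : {set Q'}) (delta' : Q' -> Sigma -> {set Q'}) (beta : {set Q'}).
Variable (g' : seq Sigma -> Q').
Hypothesis Hg' : GFG_strategy Q0' delta' (buchi_acc beta) g'.
Hypothesis Heq : forall w, lang Q0' delta' (buchi_acc beta) w <-> lang Q0 delta (rabin_acc alpha) w.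
Hypothesis Hg : GFG_strategy Q0 delta (rabin_acc alpha) (strat_of m0 rho tau).

Lemma block_acc (a0 : Sigma) (pre b : nat -> seq Sigma) m (S : {set M}) :
  (forall k, pre k.+1 = pre k ++ b k) -> (forall k, b k != [::]) ->
  foldl rho m0 (pre 0) = m -> (forall k, foldl rho m (b k) = m) ->
  (forall k, W rho m (b k) = S) ->
  (acc_g tau alpha S <-> lang Q0 delta (rabin_acc alpha) (bw a0 pre)).
Proof.
move=> preS b_ne pre0 bloop hSW.
have h1 : forall k, W rho m (b k) \subset S by move=> k; rewrite hSW.
have h2 : forall k, S \subset W rho m (b k) by move=> k; rewrite hSW.
have key := @acc_transfer Q M tau alpha (fun n => foldl rho m0 (Defs.prefix (bw a0 pre) n)) S (size (pre 0))
  (@mem_in Sigma M rho m0 m a0 pre b preS b_ne pre0 bloop S h1)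
  (@mem_inf Sigma M rho m0 m a0 pre b preS b_ne pre0 bloop S h2).
split.
  move=> hacc; exists (fun n => strat_of m0 rho tau (Defs.prefix (bw a0 pre) n)); split.
    exact: (Hg _).1.
  by apply/key.
by move=> hl; apply/key; exact: (Hg _).2 hl.
Qed.

Lemma choose_n m (v p : seq Sigma) : v != [::] -> foldl rho m v = m ->
  acc_g tau alpha (W rho m v) -> foldl rho m0 p = m ->
  exists n, (0 < n) && [exists j : 'I_(size (p ++ vn v n)).+1,
     (size p < j) && (g' (take j (p ++ vn v n)) \in beta)].
Proof.
move=> hv hl hacc hp.
have [a0 _] : exists a0 : Sigma, True by case: v hv hl hacc => // a *; exists a.
pose pre k := p ++ vn v k.
have preS : forall k, pre k.+1 = pre k ++ v by move=> k; rewrite /pre vnS catA.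
have pre0 : foldl rho m0 (pre 0) = m by rewrite /pre /vn /= cats0.
have hL := (block_acc a0 preS (fun _ => hv) pre0 (fun _ => hl) (fun _ => erefl _)).1 hacc.
have [q [hq hinf]] := (Hg' (bw a0 pre)).2 ((Heq _).2 hL).
have [k [hk hkq]] := hinf (size p).+1.
have hs := size_pre preS (fun _ => hv) k.
exists k; apply/andP; split; first by lia.
have hk' : k < (size (p ++ vn v k)).+1 by move: hs; rewrite /pre /vn /= cats0; lia.
apply/existsP; exists (Ordinal hk'); rewrite /= hk /=.
by rewrite -(prefix_bw a0 preS (fun _ => hv)) ?hkq //; move: hk'; rewrite ltnS.
Qed.

Lemma landweber m (v u : seq Sigma) : v != [::] -> foldl rho m v = m -> foldl rho m u = m ->
  reachable m0 rho m -> acc_g tau alpha (W rho m v) ->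
  acc_g tau alpha (W rho m v :|: W rho m u).
Proof.
move=> hv hl hu [x hx] hacc.
have [a0 _] : exists a0 : Sigma, True by case: v hv hl hacc => // a *; exists a.
pose P p n := (0 < n) && [exists j : 'I_(size (p ++ vn v n)).+1,
     (size p < j) && (g' (take j (p ++ vn v n)) \in beta)].
have exP : forall p, exists n, P p n || (foldl rho m0 p != m).
  move=> p; case: (eqVneq (foldl rho m0 p) m) => h; last by exists 0; rewrite orbT.
  by have [n hn] := choose_n hv hl hacc h; exists n; rewrite orbF.
pose Nf p := ex_minn (exP p).
pose pre := fix pre k := if k is k'.+1 then pre k' ++ (vn v (Nf (pre k')) ++ u) else x.
pose b k := vn v (Nf (pre k)) ++ u.
have preS : forall k, pre k.+1 = pre k ++ b k by [].
have hfold : forall k, foldl rho m0 (pre k) = m.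
  by elim=> // k IH; rewrite preS foldl_cat IH /b foldl_cat foldl_vn.
have hP : forall k, P (pre k) (Nf (pre k)).
  by move=> k; rewrite /Nf; case: ex_minnP => n; rewrite hfold eqxx orbF.
have b_ne : forall k, b k != [::].
  move=> k; have /andP [hn _] := hP k; rewrite /b -size_eq0 !size_cat.
  rewrite -(prednK hn) vnS size_cat; move: hv; rewrite -size_eq0; lia.
have bloop : forall k, foldl rho m (b k) = m by move=> k; rewrite /b foldl_cat foldl_vn.
have hW : forall k, W rho m (b k) = W rho m v :|: W rho m u.
  move=> k; have /andP [hn _] := hP k.
  by rewrite /b W_cat foldl_vn // W_vn.
apply/(block_acc a0 preS b_ne (hfold 0) bloop hW).
apply/Heq; exists (fun n => g' (Defs.prefix (bw a0 pre) n)); split; first exact: (Hg' _).1.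
have [q [hq hi]] : exists q, q \in enum beta /\ (forall n, exists k, n <= k /\ g' (Defs.prefix (bw a0 pre) k) = q).
  apply: pigeon => N; have /andP [_ /existsP [j /andP [hj1 hj2]]] := hP N.
  move: hj1 hj2 (ltn_ord j); move: (nat_of_ord j) => jn hj1 hj2 hj3; rewrite ltnS in hj3.
  exists jn; split; first by have := size_pre preS b_ne N; lia.
  rewrite (prefix_bw a0 preS b_ne (k := N.+1)); last by rewrite preS /b catA size_cat; lia.
  by rewrite mem_enum preS /b catA takel_cat.
by exists q; rewrite -mem_enum.
Qed.

End Land.

Section Final.
Variables (Sigma Q M : finType) (rho : M -> Sigma -> M) (tau : M -> Q).
Variable alpha : seq ({set Q} * {set Q}).

Lemma cyc_loop mm x s : cycle_through rho mm x s ->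
  exists v, v != [::] /\ foldl rho mm v = mm /\ [set y in x :: s] = W rho mm v.
Proof.
move=> /andP [/andP [hne /andP [hp /eqP hlast]] hm].
have [v [hs [hl hset]]] := cyc_W hp.
rewrite hlast in hl.
have hmW : mm \in W rho x v by rewrite -hset inE.
have [v' [hs' [hl' hW']]] := rot_W hl hmW.
exists v'; split; last by rewrite hW'.
by rewrite -size_eq0 hs' hs size_eq0.
Qed.

Lemma pft_word a b s : path_from_to rho a b s ->
  exists p, foldl rho a p = b /\ [set y in a :: s] = W rho a p.
Proof.
move=> /andP [hp /eqP hl]; have [v [_ [hv hset]]] := cyc_W hp.
by exists v; rewrite hv hl.
Qed.

Definition comb a (ps : seq (seq M)) : {set M} := [set y | has (fun s => y \in a :: s) ps].

Lemma in_comb a ps y : (y \in comb a ps) = has (fun s => y \in a :: s) ps.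
Proof. by rewrite inE. Qed.

Lemma comb_loop a b (z : seq Sigma) ps : foldl rho b z = a -> ps != [::] ->
  (forall s, s \in ps -> path_from_to rho a b s) ->
  exists u, foldl rho a u = a /\ W rho a u = comb a ps :|: W rho b z.
Proof.
move=> hz; elim: ps => [|s ps IH] // _ hps.
have [p [hp hset]] := pft_word (hps s (mem_head _ _)).
case: (eqVneq ps [::]) => hps0.
  subst ps; exists (p ++ z); split; first by rewrite foldl_cat hp hz.
  rewrite W_cat hp -hset; congr (_ :|: _); apply/setP => y; rewrite !inE /=.
  by rewrite orbF.
have [u [hu hW]] := IH hps0 (fun s' hs' => hps s' (mem_behead (s := s :: ps) hs')).
exists (p ++ z ++ u); split; first by rewrite !foldl_cat hp hz hu.
rewrite !W_cat hp hz hW; apply/setP => y.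
have hy : (y \in a :: s) = (y \in W rho a p) by rewrite -hset inE.
have hc : has (fun s0 => y \in a :: s0) (s :: ps) = (y \in W rho a p) || has (fun s0 => y \in a :: s0) ps.
  by rewrite -hy.
rewrite !in_setU !in_comb hc.
by move: (y \in W rho a p) (y \in W rho b z) (has _ ps) => [] [] [].
Qed.

Lemma core (S C1 C2 U V : {set M}) q mm' :
  acc_g tau alpha S -> S = C1 :|: C2 :|: U :|: V -> tau mm' = q -> mm' \in C2 ->
  ~ acc_g tau alpha C2 -> ~ acc_g tau alpha (C1 :\: [set m | tau m == q]) ->
  ~ acc_g tau alpha U -> acc_g tau alpha V.
Proof.
move=> [EF hEF [hE [y [hy yS]]]] hS htq hm2 h2 h1 hU.
have hE' : forall z, z \in EF.1 -> z \notin S by move=> z /hE /negP.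
subst S; move: yS; rewrite /= !in_setU => /orP [/orP [/orP [y1|y2]|yU]|yV].
- case: (eqVneq (tau y) q) => hq.
    exfalso; apply: h2; apply: (acc_sub hEF hE' (y := mm')).
    + by rewrite -(alpha_g_tau hEF (y := y)) // hq.
    + by apply/subsetP => z hz; rewrite !in_setU hz /= orbT.
    + done.
  exfalso; apply: h1; apply: (acc_sub hEF hE' hy).
    by apply/subsetP => z; rewrite !in_setU !inE => /andP [_ ->].
  by rewrite !inE hq.
- exfalso; apply: h2; apply: (acc_sub hEF hE' hy) => //.
  by apply/subsetP => z hz; rewrite !in_setU hz /= orbT.
- exfalso; apply: hU; apply: (acc_sub hEF hE' hy) => //.
  by apply/subsetP => z hz; rewrite !in_setU hz /= orbT.
- apply: (acc_sub hEF hE' hy) => //.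
  by apply/subsetP => z hz; rewrite !in_setU hz /= orbT.
Qed.

Lemma acc_set0 : ~ acc_g tau alpha set0.
Proof. by move=> [EF _ [_ [y [_]]]]; rewrite inE. Qed.

End Final.

Theorem lemma14 (Sigma Q : finType) (Q0 : {set Q}) (delta : Q -> Sigma -> {set Q})
  (alpha : seq ({set Q} * {set Q}))
  (M : finType) (m0 : M) (rho : M -> Sigma -> M) (tau : M -> Q) :
  (* L(A) is recognized by some GFG-NBW *)
  (exists (Q' : finType) (Q0' : {set Q'}) (delta' : Q' -> Sigma -> {set Q'})
          (beta : {set Q'}),
      GFG Q0' delta' (buchi_acc beta) /\
      forall w, lang Q0' delta' (buchi_acc beta) w <-> lang Q0 delta (rabin_acc alpha) w) ->
  (* g = <Sigma, Q, M, m0, rho, tau> witnesses the GFGness of A *)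
  GFG_strategy Q0 delta (rabin_acc alpha) (strat_of m0 rho tau) ->
  (* the transducer is trim: every memory is reachable from m0 *)
  (forall m, reachable m0 rho m) ->
  (forall (q : Q) (m : M), tau m = q ->
     ~ (on_excl_acc_cycle rho tau alpha q m /\ on_rej_cycle rho tau alpha m)) /\
  (forall (q : Q) (m m' : M), tau m = q -> tau m' = q ->
     on_excl_acc_cycle rho tau alpha q m -> on_rej_cycle rho tau alpha m' ->
     empty_or_all_comb_acc rho tau alpha m m' \/
     empty_or_all_comb_acc rho tau alpha m' m).
Proof.
move=> [Q' [Q0' [delta' [beta [[g' Hg'] Heq]]]]] Hg Htrim.
have LW := landweber Hg' Heq Hg.
split.
  move=> q mm htau [[x1 [s1 [hc1 [hacc1 hnex1]]]] [x2 [s2 [hc2 hrej2]]]].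
  have [v [hv [hl hC1]]] := cyc_loop hc1.
  have [u [_ [hu hC2]]] := cyc_loop hc2.
  rewrite hC1 in hacc1 hnex1; rewrite hC2 in hrej2.
  have hS := LW _ _ _ hv hl hu (Htrim mm) hacc1.
  apply: (@acc_set0 _ _ tau alpha).
  apply: (core (C1 := W rho mm v) (C2 := W rho mm u) (U := set0) (V := set0) (q:=q) (mm' := mm) hS) => //;
    first [by rewrite !setU0 | exact: W0 | exact: acc_set0].
move=> q mm mm' htau htau' [x1 [s1 [hc1 [hacc1 hnex1]]]] [x2 [s2 [hc2 hrej2]]].
have [v [hv [hl hC1]]] := cyc_loop hc1.
have [c [_ [hc hC2]]] := cyc_loop hc2.
rewrite hC1 in hacc1 hnex1; rewrite hC2 in hrej2.
case: (classic (empty_or_all_comb_acc rho tau alpha mm mm')) => hA; first by left.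
right; right => ps hps hpaths.
have [_ hB] := not_or_and _ _ hA.
have [ps0 hps0'] := not_all_ex_not _ _ hB.
have [hps0 hps0''] := imply_to_and _ _ hps0'.
have [hpaths0 hU0] := imply_to_and _ _ hps0''.
clear hps0' hps0''; case: ps0 hps0 hpaths0 hU0 => [//|s0 ps0'] _ hpaths0 hU0.
case: ps hps hpaths => [//|r0 ps'] _ hpaths.
have [p0 [hp0 hP0]] := pft_word (hpaths0 s0 (mem_head _ _)).
have [r [hr hR]] := pft_word (hpaths r0 (mem_head _ _)).
have hcr : foldl rho mm' (c ++ r) = mm by rewrite foldl_cat hc hr.
have [u1 [hu1 hW1]] := comb_loop (ps := s0 :: ps0') hcr isT hpaths0.
have [u2' [hu2' hW2']] := comb_loop (ps := r0 :: ps') hp0 isT hpaths.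
have hmm : mm \in W rho mm' u2' by rewrite hW2' in_setU W0 orbT.
have [u2 [_ [hu2 hW2]]] := rot_W hu2' hmm.
have hu12 : foldl rho mm (u1 ++ u2) = mm by rewrite foldl_cat hu1 hu2.
have hS := LW _ _ _ hv hl hu12 (Htrim mm) hacc1.
apply: (core (C1 := W rho mm v) (C2 := W rho mm' c) (U := comb mm (s0 :: ps0')) (q := q) (mm' := mm') hS) => //.
- rewrite W_cat hu1 hW2 hW2' hW1 W_cat hc; apply/setP => y; rewrite !in_setU.
  have h1 : (y \in W rho mm' r) ==> (y \in comb mm' (r0 :: ps')).
    by apply/implyP; rewrite -hR inE in_comb /= => ->.
  have h2 : (y \in W rho mm p0) ==> (y \in comb mm (s0 :: ps0')).
    by apply/implyP; rewrite -hP0 inE in_comb /= => ->.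
  move: h1 h2.
  by move: (y \in W rho mm v) (y \in W rho mm' c) (y \in W rho mm' r) (y \in W rho mm p0)
    (y \in comb mm' (r0 :: ps')) (y \in comb mm (s0 :: ps0')) => [] [] [] [] [] [].
- exact: W0.
Qed.
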